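(* Let $M=(v_1,\dots,v_n)$ be a finite list of nonzero vectors generating $\mathbb{F}_2^3$ such that the multiplicities of the distinct vectors in $M$ have greatest common divisor $1$. Let $\lambda_u=n-\sum_{i=1}^n(-1)^{u\cdot v_i}$ for $u\in\mathbb{F}_2^3\setminus\{0\}$, and let $d_1\le d_2\le\cdots\le d_7$ be the numbers $v_2(\lambda_u)$, $u\ne0$, in increasing order. Let $c_1$ be the order of the largest cyclic factor of the Sylow-$2$ subgroup of $K(G(\mathbb{F}_2^3,M))$. Then $c_1=2^{d_7+1}$ if the $d_i$ are not all equal, and $c_1=2^{d_7}$ if $d_1=d_2=\cdots=d_7$.
   Context: The Cayley graph $G(\mathbb{F}_2^3,M)$ has vertex set $\mathbb{F}_2^3$ and Laplacian $L$ indexed by $\mathbb{F}_2^3$ with $L_{u,u}=n$ and $L_{u,w}=-\#\{i:u+v_i=w\}$ for $u\ne w$; $\operatorname{coker}L\cong\mathbb{Z}\oplus K(G)$ with $K(G)$ finite abelian (the sandpile group). The $\lambda_u$ are the nonzero eigenvalues of $L$. $v_2$ is the $2$-adic valuation. *)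

(* Defs.v *)
From HB Require Import structures.
From mathcomp Require Import all_boot all_order all_algebra.
Set Implicit Arguments. Unset Strict Implicit. Unset Printing Implicit Defensive.
Import Order.TTheory GRing.Theory Num.Theory.
Local Open Scope ring_scope.

Definition V := 'rV['F_2]_3.

Definition dot (u v : V) : 'F_2 := (u *m v^T) 0 0.

(* Laplacian of the Cayley graph G(F_2^3, M), n = size M:
   L u u = n,  L u w = - #{i : u + v_i = w} for u <> w. *)
Definition lap (M : seq V) (u w : V) : int :=
  if u == w then (size M)%:Z else - (count (fun v => u + v == w) M)%:Z.

(* x : Z^V lies in the image L(Z^V) (i.e. is zero in coker L). *)
Definition inImL (M : seq V) (x : V -> int) : Prop :=
  exists y : V -> int, forall u, x u = \sum_(w : V) lap M u w * y w.

Definition coker_order (M : seq V) (x : V -> int) (m : nat) : Prop :=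
  (0 < m)%N /\ inImL M (fun u => (m%:Z * x u)%R) /\
  (forall j : nat, (0 < j < m)%N -> ~ inImL M (fun u => (j%:Z * x u)%R)).

Definition lam (M : seq V) (u : V) : int :=
  (size M)%:Z - \sum_(v <- M) (if dot u v == 0 then 1 else -1).

Definition d2 (M : seq V) (u : V) : nat := logn 2 `|lam M u|%N.

(* Main.v *)
Require Import Defs.
From HB Require Import structures.
From mathcomp Require Import all_boot all_order all_algebra.
From mathcomp Require Import zify ring lra.
Import Order.TTheory GRing.Theory Num.Theory.
Local Open Scope ring_scope.
Set Implicit Arguments. Unset Strict Implicit. Unset Printing Implicit Defensive.
Lemma F2P (a : 'F_2) : a = 0 \/ a = 1.
Proof. case: a => [[|[|n]] Hn]; [left|right|]; try exact: val_inj. by []. Qed.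
Lemma F2_11 : (1 + 1 : 'F_2) = 0. Proof. exact: val_inj. Qed.
Lemma F2_10 : (1 : 'F_2) != 0. Proof. by apply/eqP => /(congr1 val). Qed.
Lemma cardV : #|{: V}| = 8%N.
Proof. by rewrite card_mx card_Fp. Qed.

Lemma F2_aa (a : 'F_2) : a + a = 0.
Proof. by case: (F2P a) => ->; rewrite ?addr0 ?F2_11. Qed.

Lemma V_aa (u : V) : u + u = 0.
Proof. by apply/matrixP => i j; rewrite !mxE F2_aa. Qed.

Lemma V_opp (u : V) : - u = u.
Proof. by apply/eqP; rewrite eq_sym -addr_eq0 V_aa. Qed.

Lemma V_addK (u v : V) : u + v + v = u.
Proof. by rewrite -addrA V_aa addr0. Qed.

Lemma dotE (u v : V) : dot u v = \sum_k u 0 k * v 0 k.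
Proof. by rewrite /dot !mxE; apply: eq_bigr => k _; rewrite !mxE. Qed.

Lemma dotC (u v : V) : dot u v = dot v u.
Proof. by rewrite !dotE; apply: eq_bigr => k _; rewrite mulrC. Qed.

Lemma dotDl (u w v : V) : dot (u + w) v = dot u v + dot w v.
Proof. by rewrite !dotE -big_split; apply: eq_bigr => k _; rewrite !mxE mulrDl. Qed.

Lemma dotDr (v u w : V) : dot v (u + w) = dot v u + dot v w.
Proof. by rewrite dotC dotDl !(dotC v). Qed.

Lemma dot0l (v : V) : dot 0 v = 0.
Proof. by rewrite dotE big1 // => k _; rewrite mxE mul0r. Qed.
Lemma dot0r (v : V) : dot v 0 = 0.
Proof. by rewrite dotC dot0l. Qed.

Definition chi (s g : V) : int := if dot s g == 0 then 1 else -1.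

Lemma chiC s g : chi s g = chi g s.
Proof. by rewrite /chi dotC. Qed.

Lemma chi0l g : chi 0 g = 1. Proof. by rewrite /chi dot0l eqxx. Qed.
Lemma chi0r g : chi g 0 = 1. Proof. by rewrite /chi dot0r eqxx. Qed.

Lemma F2_add_eq0 (a b : 'F_2) : (a + b == 0) = ((a == 0) == (b == 0)).
Proof.
by case: (F2P a) => ->; case: (F2P b) => ->; rewrite ?addr0 ?add0r ?F2_11 ?eqxx ?(negbTE F2_10).
Qed.

Lemma chiDr s g h : chi s (g + h) = chi s g * chi s h.
Proof.
rewrite /chi dotDr F2_add_eq0.
by case: (dot s g == 0); case: (dot s h == 0).
Qed.

Lemma chiDl s s' g : chi (s + s') g = chi s g * chi s' g.
Proof. by rewrite chiC chiDr !(chiC g). Qed.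

Lemma chi_sq s g : chi s g * chi s g = 1.
Proof. by rewrite /chi; case: ifP. Qed.

Lemma chiP s g : chi s g = 1 \/ chi s g = -1.
Proof. by rewrite /chi; case: ifP; [left|right]. Qed.

Lemma nz_coord (g : V) : g != 0 -> exists i, g 0 i != 0.
Proof.
move=> gn0; apply/existsP; apply: contraNT gn0 => /existsPn H.
apply/eqP/matrixP => i j; rewrite mxE (ord1 i).
by move: (H j); rewrite negbK => /eqP.
Qed.

Lemma dot_delta (g : V) i : dot (delta_mx 0 i) g = g 0 i.
Proof.
rewrite dotE (bigD1 i) //= big1 ?addr0; first by rewrite mxE !eqxx mul1r.
by move=> k ki; rewrite mxE eqxx /= (negbTE ki) mul0r.
Qed.

Lemma exists_chi_neg (g : V) : g != 0 -> exists s, chi s g = -1.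
Proof.
move=> /nz_coord [i Hi]; exists (delta_mx 0 i).
by rewrite /chi dot_delta (negbTE Hi).
Qed.

Lemma sum_chi (g : V) : \sum_s chi s g = if g == 0 then 8 else 0.
Proof.
case: eqP => [->|/eqP gn0].
  under eq_bigr do rewrite chi0r.
  by rewrite sumr_const cardV.
have [s0 Hs0] := exists_chi_neg gn0.
set S := \sum_s _.
have : S = - S.
  rewrite {1}/S (reindex_inj (addIr s0)) /=.
  under eq_bigr do rewrite chiDl Hs0 mulrN1.
  by rewrite sumrN.
lia.
Qed.
Definition F (x : V -> int) (s : V) : int := \sum_g chi s g * x g.

Lemma FF x g : F (F x) g = 8 * x g.
Proof.
rewrite /F.
under eq_bigr do rewrite big_distrr /=.
rewrite exchange_big /=.
rewrite (bigD1 g) //= [X in _ + X]big1 ?addr0.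
  under eq_bigr do rewrite mulrA (chiC g) -chiDr V_aa chi0r mul1r.
  rewrite sumr_const cardV; lia.
move=> h hg.
under eq_bigr do rewrite mulrCA mulrA (chiC g) -chiDr.
rewrite -big_distrl /= sum_chi.
case: eqP => [E|]; last by rewrite mul0r.
by move: hg; rewrite -(V_addK h g) E add0r eqxx.
Qed.

Lemma F_inj x z : (forall s, F x s = F z s) -> forall g, x g = z g.
Proof.
move=> H g.
have : F (F x) g = F (F z) g by rewrite {1 3}/F; apply: eq_bigr => s _; rewrite H.
rewrite !FF; lia.
Qed.

Lemma F_scale c x s : F (fun g => c * x g) s = c * F x s.
Proof. by rewrite /F big_distrr; apply: eq_bigr => g _; rewrite mulrCA. Qed.

Lemma F_add x z s : F (fun g => x g + z g) s = F x s + F z s.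
Proof. by rewrite /F -big_split; apply: eq_bigr => g _; rewrite mulrDr. Qed.

Lemma F_delta a s : F (fun g => (g == a)%:Z) s = chi s a.
Proof.
rewrite /F (bigD1 a) //= eqxx mulr1 big1 ?addr0 // => g ga.
by rewrite (negbTE ga) mulr0.
Qed.

Lemma liftF (Y : V -> int) : (forall g, (8 %| F Y g)%Z) ->
  exists y, forall s, F y s = Y s.
Proof.
move=> H; exists (fun g => (F Y g %/ 8)%Z) => s.
have E : forall g, F Y g = 8 * (F Y g %/ 8)%Z.
  by move=> g; rewrite mulrC divzK.
have : 8 * F (fun g => (F Y g %/ 8)%Z) s = 8 * Y s.
  rewrite -F_scale -FF; rewrite /F; apply: eq_bigr => g _; by rewrite -E.
lia.
Qed.

Lemma chi_sub1 s g : (2 %| chi s g - 1)%Z.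
Proof. by case: (chiP s g) => ->. Qed.

Lemma F_even x s : (2 %| F x s - F x 0%R)%Z.
Proof.
have -> : F x s - F x 0%R = \sum_g (chi s g - 1) * x g.
  rewrite /F -sumrB; apply: eq_bigr => g _; rewrite chi0l; ring.
by apply: rpred_sum => g _; apply: dvdz_mulr; apply: chi_sub1.
Qed.
Lemma count_int (T : Type) (p : pred T) s : (count p s)%:Z = \sum_(v <- s) (p v)%:Z.
Proof. elim: s => [|v s IH]; first by rewrite big_nil. by rewrite big_cons /= PoszD IH. Qed.

Definition LM (M : seq V) (y : V -> int) (u : V) : int := \sum_w lap M u w * y w.

Lemma lap_eq (M : seq V) u w : all (fun v => v != 0) M ->
  lap M u w = (u == w)%:Z * (size M)%:Z - (count (fun v => u + v == w) M)%:Z.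
Proof.
move=> HM; rewrite /lap; case: eqP => [<-|_]; last by rewrite mul0r sub0r.
rewrite mul1r (_ : count _ _ = 0%N) ?subr0 //.
apply/eqP; rewrite -leqn0 leqNgt -has_count; apply/hasPn => v vM.
have := allP HM v vM; apply: contra => /eqP E.
by rewrite -(addrI u (etrans E (esym (addr0 u)))).
Qed.

Lemma LM_expand M y u : all (fun v => v != 0) M ->
  LM M y u = (size M)%:Z * y u - \sum_(v <- M) y (u + v).
Proof.
move=> HM; rewrite /LM.
under eq_bigr do rewrite lap_eq // mulrBl.
rewrite sumrB (bigD1 u) //= eqxx mul1r [\sum_(i | i != u) _]big1 ?addr0; last first.
  by move=> w; rewrite eq_sym => /negbTE ->; rewrite !mul0r.
congr (_ - _).
under eq_bigr do rewrite count_int big_distrl /=.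
rewrite exchange_big /=; apply: eq_bigr => v _.
rewrite (bigD1 (u + v)) //= eqxx mul1r big1 ?addr0 // => w /negbTE.
by rewrite eq_sym => ->; rewrite mul0r.
Qed.

Lemma F_LM M y s : all (fun v => v != 0) M ->
  F (LM M y) s = lam M s * F y s.
Proof.
move=> HM; rewrite /F.
under eq_bigr do rewrite LM_expand // mulrBr.
rewrite sumrB /lam mulrBl; congr (_ - _).
  by rewrite big_distrr; apply: eq_bigr => g _ /=; rewrite mulrCA.
under eq_bigr do rewrite big_distrr /=.
rewrite exchange_big /= big_distrl /=; apply: eq_bigr => v _.
rewrite (reindex_inj (addIr v)) /= big_distrr /=; apply: eq_bigr => g _.
rewrite V_addK chiDr /chi; ring.
Qed.

Lemma inImL_F M z : all (fun v => v != 0) M ->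
  inImL M z <-> exists y, forall s, F z s = lam M s * F y s.
Proof.
move=> HM; split.
  case=> y Hy; exists y => s; rewrite -F_LM //.
  by rewrite /F; apply: eq_bigr => g _; rewrite Hy.
case=> y Hy; exists y; apply: F_inj => s.
by rewrite Hy -F_LM.
Qed.

Lemma inImL_lin M z1 z2 a b : inImL M z1 -> inImL M z2 ->
  inImL M (fun u => a * z1 u + b * z2 u).
Proof.
case=> y1 H1 [y2 H2]; exists (fun w => a * y1 w + b * y2 w) => u.
rewrite H1 H2 !big_distrr -big_split /=; apply: eq_bigr => w _; ring.
Qed.

Lemma inImL_ext M z1 z2 : (forall u, z1 u = z2 u) -> inImL M z1 -> inImL M z2.
Proof. by move=> E [y Hy]; exists y => u; rewrite -E. Qed.

Lemma inImL_scale M z c : inImL M z -> inImL M (fun u => c * z u).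
Proof.
move=> H; apply: (inImL_ext _ (inImL_lin c 0 H H)) => u; ring.
Qed.
Definition T3 := (bool * bool * bool)%type.
Definition allT : seq T3 := [:: (true,true,true); (true,true,false); (true,false,true); (true,false,false);
  (false,true,true); (false,true,false); (false,false,true); (false,false,false)].
Lemma allT_all (t : T3) : t \in allT. Proof. by case: t => [[[] []] []]. Qed.
Definition z3 : T3 := (false,false,false).
Definition dotb (a b : T3) := (a.1.1 && b.1.1) (+) (a.1.2 && b.1.2) (+) (a.2 && b.2).

Lemma pair3b : all (fun t1 => all (fun t2 => (t1 != z3) ==> (t2 != z3) ==> (t1 != t2) ==>
  has (fun g => has (fun h => all (fun t => (dotb t g && dotb t h) == ((t == t1) || (t == t2))) allT) allT) allT) allT) allT.
Proof. by vm_compute. Qed.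

Lemma pair3 t1 t2 : t1 != z3 -> t2 != z3 -> t1 != t2 ->
  exists g h, forall t, (dotb t g && dotb t h) = ((t == t1) || (t == t2)).
Proof.
move=> H1 H2 H12.
have := allP pair3b t1 (allT_all _) => /allP /(_ t2 (allT_all _)).
rewrite H1 H2 H12 !implyTb => /hasP [g _ /hasP [h _ /allP Hh]].
by exists g, h => t; apply/eqP; apply: Hh; apply: allT_all.
Qed.

Definition o0 : 'I_3 := ord0.
Definition o1 : 'I_3 := lift ord0 ord0.
Definition o2 : 'I_3 := lift ord0 (lift ord0 ord0).
Definition tr (u : V) : T3 := (u 0 o0 != 0, u 0 o1 != 0, u 0 o2 != 0).

Lemma F2_mul_neq0 (a b : 'F_2) : (a * b != 0) = (a != 0) && (b != 0).
Proof. by rewrite mulf_eq0 negb_or. Qed.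
Lemma F2_add_neq0 (a b : 'F_2) : (a + b != 0) = (a != 0) (+) (b != 0).
Proof. by rewrite F2_add_eq0; case: (a == 0); case: (b == 0). Qed.

Lemma dot_tr u v : (dot u v != 0) = dotb (tr u) (tr v).
Proof.
rewrite dotE !big_ord_recl big_ord0 addr0 !F2_add_neq0 !F2_mul_neq0.
by rewrite /dotb /tr /= addbA.
Qed.

Lemma tr_inj : injective tr.
Proof.
move=> u v [E0 E1 E2]; apply/matrixP => i j; rewrite (ord1 i).
have H : forall a b : 'F_2, (a != 0) = (b != 0) -> a = b.
  by move=> a b; case: (F2P a) => ->; case: (F2P b) => ->; rewrite ?eqxx ?(negbTE F2_10).
case: j => [[|[|[|n]]] Hj]; apply: H.
- by rewrite (_ : Ordinal Hj = o0) //; apply: val_inj.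
- by rewrite (_ : Ordinal Hj = o1) //; apply: val_inj.
- by rewrite (_ : Ordinal Hj = o2) //; apply: val_inj.
- by [].
Qed.

Definition mk3 (t : T3) : V := \row_(k < 3) ((nth false [:: t.1.1; t.1.2; t.2] k)%:R : 'F_2).

Lemma tr_mk3 t : tr (mk3 t) = t.
Proof.
rewrite /tr /mk3 !mxE /=.
by case: t => [[[] []] []]; rewrite /= ?F2_10 ?eqxx.
Qed.

Lemma tr0 : tr 0 = z3. Proof. by rewrite /tr !mxE eqxx. Qed.

Lemma pairV (s1 s2 : V) : s1 != 0 -> s2 != 0 -> s1 != s2 ->
  exists g h : V, forall s, (dot s g != 0) && (dot s h != 0) = (s == s1) || (s == s2).
Proof.
move=> H1 H2 H12.
have H1' : tr s1 != z3 by rewrite -tr0 (inj_eq tr_inj).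
have H2' : tr s2 != z3 by rewrite -tr0 (inj_eq tr_inj).
have H12' : tr s1 != tr s2 by rewrite (inj_eq tr_inj).
have [g [h Hgh]] := pair3 H1' H2' H12'.
exists (mk3 g), (mk3 h) => s.
by rewrite !dot_tr !tr_mk3 Hgh !(inj_eq tr_inj).
Qed.

Lemma tripleV : exists g h g' s0 : V, s0 != 0 /\ forall s,
  [&& dot s g != 0, dot s h != 0 & dot s g' != 0] = (s == s0).
Proof.
exists (mk3 (true,false,false)), (mk3 (false,true,false)), (mk3 (false,false,true)),
  (mk3 (true,true,true)); split.
  by rewrite -(inj_eq tr_inj) tr_mk3 tr0.
move=> s; rewrite !dot_tr !tr_mk3 -(inj_eq tr_inj) tr_mk3.
by case: (tr s) => [[[] []] []].
Qed.

Lemma dot_scaler (s w : V) (a : 'F_2) : dot s (a *: w) = a * dot s w.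
Proof. by rewrite !dotE big_distrr; apply: eq_bigr => k _; rewrite mxE mulrCA. Qed.

Lemma span_dot (M : seq V) (s : V) : <<M>>%VS = fullv ->
  (forall v, v \in M -> dot s v = 0) -> s = 0.
Proof.
move=> Hsp H.
have Hall : forall w : V, dot s w = 0.
  move=> w.
  have : w \in <<in_tuple M>>%VS by rewrite Hsp memvf.
  move/coord_span => ->.
  rewrite (big_morph (dot s) (dotDr s) (dot0r s)) big1 // => i _.
  rewrite dot_scaler H ?mulr0 //.
  by apply: mem_nth; exact: ltn_ord.
apply/matrixP => i j; rewrite (ord1 i) mxE.
by rewrite -dot_delta dotC Hall.
Qed.
Lemma bezout2 (m b : nat) : odd m -> exists u v : int, u * m%:Z + v * (2 ^ b)%N%:Z = 1.
Proof.
move=> Hm; have [u [v E]] := Bezoutz m%:Z (2 ^ b)%N%:Z.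
have : coprimez m%:Z (2 ^ b)%N%:Z by rewrite coprimezE /= coprimeXr // coprimen2.
by rewrite /coprimez => /eqP G; exists u, v; rewrite E G.
Qed.

Lemma bez_pow2 M (z : V -> int) (a b m : nat) : odd m ->
  inImL M (fun u => (2 ^ a * m)%N%:Z * z u) ->
  inImL M (fun u => (2 ^ (a + b))%N%:Z * z u) ->
  inImL M (fun u => (2 ^ a)%N%:Z * z u).
Proof.
move=> Hm H1 H2; have [p [q E]] := bezout2 b Hm.
apply: (inImL_ext _ (inImL_lin p q H1 H2)) => u.
rewrite expnD !PoszM -[RHS]mul1r -E; ring.
Qed.

Lemma lam_cnt M s : lam M s = Posz (2 * count (fun v => dot s v != 0%R) M).
Proof.
rewrite /lam; elim: M => [|v M IH]; first by rewrite big_nil.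
rewrite big_cons /= -/(chi s v).
have -> : Posz (size M).+1 - (chi s v + \sum_(j <- M) (if dot s j == 0%R then 1 else -1))
  = (Posz (size M) - \sum_(j <- M) (if dot s j == 0%R then 1 else -1)) + (1 - chi s v).
  by rewrite -addn1 PoszD; ring.
rewrite IH /chi; case: eqP => _ /=; rewrite ?add0n ?mulnDr; lia.
Qed.
Lemma odd_dvd (n : nat) : odd n -> (2 %| n%:Z - 1)%Z.
Proof. move=> H; have := odd_double_half n; rewrite H; lia. Qed.

Lemma liftY (x : V -> int) (dl : V -> int) (b : int) :
  (forall s, s != 0 -> (2 %| dl s - b)%Z) -> F x 0 = 0 ->
  exists y, forall s, s != 0 -> F y s = dl s * F x s.
Proof.
move=> Hd Hx0.
pose dl' s := if s == 0 then b else dl s.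
have Hd' : forall s, (2 %| dl' s - b)%Z.
  by move=> s; rewrite /dl'; case: eqP => [_|/eqP /Hd //]; rewrite subrr dvdz0.
pose k s := ((dl' s - b) %/ 2)%Z.
have Hk : forall s, dl' s = b + 2 * k s.
  by move=> s; rewrite /k mulrC divzK ?Hd' //; ring.
pose X := F x.
pose t := - \sum_s 2 * k s * X s.
pose Y s := dl' s * X s + (if s == 0 then t else 0).
have HY : forall g, (8 %| F Y g)%Z.
  move=> g.
  have E1 : forall s, chi g s * Y s = b * (chi g s * X s) + (2 * k s * X s) * (chi g s - 1)
      + 2 * k s * X s + chi g s * (if s == 0 then t else 0).
    by move=> s; rewrite /Y Hk; ring.
  rewrite /F (eq_bigr _ (fun s _ => E1 s)) !big_split /= -big_distrr /=.
  have -> : \sum_i chi g i * (if i == 0 then t else 0) = t.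
    rewrite (bigD1 0) //= eqxx chi0r mul1r big1 ?addr0 //.
    by move=> s /negbTE ->; rewrite mulr0.
  have -> : \sum_i chi g i * X i = F X g by [].
  rewrite /X FF /t.
  have H2 : (8 %| \sum_i 2 * k i * F x i * (chi g i - 1))%Z.
    apply: rpred_sum => s _.
    have := F_even x s; rewrite Hx0 subr0.
    case: (chiP g s) => ->; first by rewrite subrr mulr0.
    move=> /dvdzP [q ->]; apply/dvdzP; exists (- k s * q); ring.
  move: H2; set S := \sum_i _.
  have -> : b * (8 * x g) + S + \sum_i 2 * k i * F x i + - \sum_s 2 * k s * F x s
     = 8 * (b * x g) + S by ring.
  move=> H2; apply: rpredD => //; exact: dvdz_mulr (dvdzz 8).
have [y Hy] := liftF HY.
exists y => s sn0; rewrite Hy /Y (negbTE sn0) addr0 /dl' (negbTE sn0).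
by [].
Qed.

Lemma key_contra (Y : V -> int) (g s1 : V) : (forall g', (8 %| F Y g')%Z) ->
  (forall s, (8 %| (1 - chi s g) * Y s - 4 * (s == s1)%:Z)%Z) -> False.
Proof.
move=> HF Hs.
have E : F Y 0 - F Y g = \sum_s (1 - chi s g) * Y s.
  by rewrite /F -sumrB; apply: eq_bigr => s _; rewrite chi0l chiC; ring.
have H : (8 %| \sum_s ((1 - chi s g) * Y s - 4 * (s == s1)%:Z))%Z.
  by apply: rpred_sum => s _; apply: Hs.
move: H; rewrite sumrB -E -big_distrr /= (bigD1 s1) //= eqxx big1 ?addr0; last first.
  by move=> s /negbTE ->.
move: (HF 0) (HF g); lia.
Qed.
Lemma nz111 : mk3 (true,true,true) != 0.
Proof. by rewrite -(inj_eq tr_inj) tr_mk3 tr0. Qed.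

Section Main.
Variable M : seq V.
Hypothesis HM : all (fun v => v != 0) M.
Hypothesis Hsp : <<M>>%VS = fullv.

Definition cnt s := count (fun v => dot s v != 0%R) M.

Lemma lam_cnt' s : lam M s = Posz (2 * cnt s)%N.
Proof. by rewrite lam_cnt. Qed.

Lemma lam0 : lam M 0 = 0.
Proof.
rewrite lam_cnt' /cnt (_ : count _ _ = 0%N) //.
by apply/eqP; rewrite -leqn0 leqNgt -has_count; apply/hasPn => v _; rewrite dot0l eqxx.
Qed.

Lemma cnt_pos s : s != 0 -> (0 < cnt s)%N.
Proof.
move=> sn0; rewrite /cnt -has_count; apply: contraNT sn0 => /hasPn H.
apply/eqP; apply: (span_dot Hsp) => v /H; by rewrite negbK => /eqP.
Qed.

Lemma d2E s : d2 M s = logn 2 (2 * cnt s).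
Proof. by rewrite /d2 lam_cnt'. Qed.

Definition o s := ((2 * cnt s) %/ 2 ^ d2 M s)%N.

Lemma o_spec s : s != 0 -> (2 * cnt s = o s * 2 ^ d2 M s)%N /\ odd (o s).
Proof.
move=> sn0.
have Hp : (0 < 2 * cnt s)%N by rewrite muln_gt0 cnt_pos.
have [m Hm E] := pfactor_coprime (isT : prime 2) Hp.
have Eo : o s = m by rewrite /o d2E {1}E mulnK // expn_gt0.
by rewrite Eo d2E -E; split => //; rewrite -coprime2n.
Qed.

Lemma d_pos s : s != 0 -> (0 < d2 M s)%N.
Proof.
move=> sn0; have [E Ho] := o_spec sn0.
rewrite lt0n; apply/negP => /eqP Ed; move: E; rewrite Ed expn0 muln1 => E.
by move: Ho; rewrite -E oddM.
Qed.

Lemma o_pos s : s != 0 -> (0 < o s)%N.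
Proof. by move=> /o_spec [_ H]; case: (o s) H. Qed.

Lemma lam_eq s : s != 0 -> lam M s = Posz (2 ^ d2 M s * o s)%N.
Proof. by move=> /o_spec [E _]; rewrite lam_cnt' E mulnC. Qed.

Definition C := (\prod_(s : V | s != 0%R) o s)%N.
Definition Cs s := (\prod_(t : V | (t != 0%R) && (t != s)) o t)%N.

Lemma C_split s : s != 0 -> C = (o s * Cs s)%N.
Proof. by move=> sn0; rewrite /C (bigD1 s). Qed.

Lemma Cs_odd s : odd (Cs s).
Proof.
rewrite /Cs; apply: (big_ind (fun n => odd n)) => //.
  by move=> a b Ha Hb; rewrite oddM Ha.
by move=> t /andP [t0 _]; case: (o_spec t0).
Qed.

Lemma C_odd : odd C.
Proof.
rewrite /C; apply: (big_ind (fun n => odd n)) => //.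
  by move=> a b Ha Hb; rewrite oddM Ha.
by move=> t t0; case: (o_spec t0).
Qed.

Definition d7 := (\max_(u : V | u != 0%R) d2 M u)%N.

Lemma d_le s : s != 0 -> (d2 M s <= d7)%N.
Proof. by move=> sn0; apply: leq_bigmax_cond. Qed.

Lemma d7_att : exists s1, s1 != 0 /\ d2 M s1 = d7.
Proof.
case: (@arg_maxnP _ (mk3 (true,true,true)) (fun u : V => u != 0) (fun u => d2 M u) nz111) => s1 Hs1 Hmax.
exists s1; split => //; apply/eqP; rewrite eqn_leq d_le //=.
by apply/bigmax_leqP => j /Hmax.
Qed.

Definition ALL := [forall u : V, forall w : V,
                 (u != 0) ==> (w != 0) ==> (d2 M u == d2 M w)].
Definition ee := if ALL then d7 else d7.+1.

Lemma ALL_d : ALL -> forall s, s != 0 -> d2 M s = d7.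
Proof.
move=> /forallP H s sn0; have [s1 [s10 <-]] := d7_att.
by move: (H s) => /forallP /(_ s1); rewrite sn0 s10 /= => /eqP.
Qed.

Lemma d_le_e s : s != 0 -> (d2 M s <= ee)%N.
Proof. by move=> sn0; rewrite /ee; case: ifP => _; [|apply: leqW]; apply: d_le. Qed.

Lemma ee_pos : (0 < ee)%N.
Proof. by apply: leq_trans (d_pos nz111) (d_le_e nz111). Qed.

Lemma upper_core x : F x 0 = 0 -> inImL M (fun u => Posz (2 ^ ee * C)%N * x u).
Proof.
move=> Hx0; apply/inImL_F => //.
have Hdl : forall s, s != 0 ->
    (2 %| Posz (2 ^ (ee - d2 M s) * Cs s)%N - (if ALL then 1 else 0))%Z.
  move=> s sn0; rewrite /ee; case: ifP => HA.
    by rewrite ALL_d // subnn expn0 mul1n; apply: odd_dvd; apply: Cs_odd.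
  rewrite subr0 subSn ?d_le // expnS -mulnA PoszM.
  by apply: dvdz_mulr; apply: dvdzz.
have [y Hy] := liftY Hdl Hx0.
exists y => s; rewrite F_scale.
case: (eqVneq s 0) => [->|sn0]; first by rewrite lam0 Hx0 !mul0r mulr0.
rewrite Hy // lam_eq // mulrA -PoszM; congr (Posz _ * _).
rewrite (C_split sn0) -{1}(subnKC (d_le_e sn0)) expnD -!mulnA.
by congr (_ * _)%N; rewrite mulnCA.
Qed.


Lemma sum_delta s a : \sum_u chi s u * (u == a)%:Z = chi s a.
Proof. exact: F_delta. Qed.

Lemma F_x0a h s : F (fun u => (u == 0)%:Z - (u == h)%:Z) s = 1 - chi s h.
Proof.
rewrite /F; under eq_bigr do rewrite mulrBr.
by rewrite sumrB !sum_delta chi0r.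
Qed.

Lemma F_x0b g h s : F (fun u => (u == 0)%:Z - (u == g)%:Z - (u == h)%:Z + (u == g + h)%:Z) s
  = (1 - chi s g) * (1 - chi s h).
Proof.
rewrite /F; under eq_bigr do rewrite mulrDr !mulrBr.
rewrite big_split !sumrB /= !sum_delta chi0r chiDr; ring.
Qed.

Lemma nzP (n : nat) : (0 < n)%N -> Posz n != 0.
Proof. by case: n. Qed.

Lemma lower_NAE : ~~ ALL -> exists x0 : V -> int, F x0 0%R = 0 /\ (inImL M (fun u => Posz (2 ^ d7 * C)%N * x0 u) -> False).
Proof.
move=> HA.
have [u [w [u0 [w0 Duw]]]] : exists u w, u != 0 /\ w != 0 /\ d2 M u != d2 M w.
  move: HA; rewrite /ALL => /forallPn [u /forallPn [w]].
  rewrite negb_imply => /andP [u0]; rewrite negb_imply => /andP [w0 D].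
  by exists u, w.
have [s1 [s10 Hs1]] := d7_att.
pose s2 := if d2 M u == d7 then w else u.
have s20 : s2 != 0 by rewrite /s2; case: ifP.
have Hs2 : d2 M s2 != d7.
  rewrite /s2; case: (eqVneq (d2 M u) d7) => [Hu|Hu] //.
  by rewrite -Hu eq_sym.
have s12 : s1 != s2 by apply: contra Hs2 => /eqP <-; rewrite Hs1.
have [g [h Hgh]] := pairV s10 s20 s12.
exists (fun u => (u == 0)%:Z - (u == h)%:Z); split; first by rewrite F_x0a chi0l subrr.
move/(inImL_F _ HM) => [y Hy].
apply: (key_contra (Y := F y) (g := g) (s1 := s1)).
  by move=> g'; rewrite FF; apply: dvdz_mulr; apply: dvdzz.
move=> s; case: (eqVneq s 0) => [->|sn0].
  by rewrite chi0l subrr mul0r eq_sym (negbTE s10) mulr0 subrr dvdz0.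
have := Hy s; rewrite F_scale F_x0a lam_eq //.
have EC : (2 ^ d7 * C = 2 ^ d2 M s * o s * (2 ^ (d7 - d2 M s) * Cs s))%N.
  rewrite (C_split sn0) -{1}(subnKC (d_le sn0)) expnD -!mulnA.
  by congr (_ * _)%N; rewrite mulnCA.
rewrite EC PoszM -mulrA => /mulfI EY.
have Hnz : Posz (2 ^ d2 M s * o s)%N != 0.
  by apply: nzP; rewrite muln_gt0 expn_gt0 o_pos.
have {EY} EY := EY Hnz.
have Hodd := odd_dvd (Cs_odd s).
case: (eqVneq s s1) => [Es|ns1].
  subst s; move: EY; rewrite Hs1 subnn expn0 mul1n => EY.
  move: (Hgh s1); rewrite eqxx /= => /andP [G H].
  rewrite /chi (negbTE G) (negbTE H) in EY *.
  rewrite -EY; lia.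
have -> : (4 : int) * false = 0 by [].
rewrite subr0.
case: (eqVneq s s2) => [Es|ns2].
  subst s.
  move: (Hgh s2); rewrite eqxx orbT => /andP [G H].
  have HP : (2 %| Posz (2 ^ (d7 - d2 M s2)))%Z.
    move: (d_le s20) Hs2; case E: (d7 - d2 M s2)%N => [|k].
      by move=> Hle; rewrite eqn_leq Hle -subn_eq0 E.
    by move=> _ _; rewrite expnS PoszM; apply: dvdz_mulr; apply: dvdzz.
  rewrite -EY PoszM /chi (negbTE G) (negbTE H).
  move: HP => /dvdzP [q ->]; apply/dvdzP; exists (q * Cs s2); ring.
move: (Hgh s); rewrite (negbTE ns1) (negbTE ns2) /=.
rewrite -EY /chi; case: (dot s g == 0); case: (dot s h == 0) => //= _;
  rewrite ?subrr ?mulr0 ?mul0r ?dvdz0 //.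
Qed.

Lemma lower_AE : ALL -> exists x0 : V -> int, F x0 0%R = 0 /\ (inImL M (fun u => Posz (2 ^ d7.-1 * C)%N * x0 u) -> False).
Proof.
move=> HA.
have [g [h [g' [s0 [s00 Ht]]]]] := tripleV.
exists (fun u => (u == 0)%:Z - (u == g)%:Z - (u == h)%:Z + (u == g + h)%:Z).
split; first by rewrite F_x0b chi0l subrr mul0r.
move/(inImL_F _ HM) => [y Hy].
apply: (key_contra (Y := F y) (g := g') (s1 := s0)).
  by move=> g''; rewrite FF; apply: dvdz_mulr; apply: dvdzz.
move=> s; case: (eqVneq s 0) => [->|sn0].
  by rewrite chi0l subrr mul0r eq_sym (negbTE s00) mulr0 subrr dvdz0.
have := Hy s; rewrite F_scale F_x0b lam_eq // ALL_d //.
have Hd := d_pos sn0; rewrite ALL_d // in Hd.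
have EC : (2 ^ d7.-1 * C = 2 ^ d7.-1 * o s * Cs s)%N by rewrite (C_split sn0) mulnA.
have El : (2 ^ d7 * o s = 2 ^ d7.-1 * o s * 2)%N.
  by rewrite -{1}(prednK Hd) expnS -mulnA mulnC.
rewrite EC El (PoszM (2 ^ d7.-1 * o s)%N) (PoszM (2 ^ d7.-1 * o s)%N) -!mulrA => /mulfI EY.
have Hnz : Posz (2 ^ d7.-1 * o s)%N != 0.
  by apply: nzP; rewrite muln_gt0 expn_gt0 o_pos.
have {EY} EY := EY Hnz.
have Hodd := odd_dvd (Cs_odd s).
move: (Ht s) EY; rewrite /chi.
case: (dot s g == 0); case: (dot s h == 0); case: (dot s g' == 0) => /= <- EY; lia.
Qed.

End Main.

Theorem mainTheorem15 (M : seq V) :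
  all (fun v => v != 0) M ->
  (<<M>>%VS = fullv) ->
  (\big[gcdn/0%N]_(v <- undup M) count_mem v M)%N = 1%N ->
  let d7 := \max_(u : V | u != 0%R) d2 M u in
  let e := if [forall u : V, forall w : V,
                 (u != 0) ==> (w != 0) ==> (d2 M u == d2 M w)]
           then d7 else d7.+1 in
  (exists x : V -> int, coker_order M x (2 ^ e)%N) /\
  (forall (x : V -> int) (k : nat), coker_order M x (2 ^ k)%N -> (k <= e)%N).
Proof.
move=> HM Hsp _ d7' e'.
have -> : e' = ee M by [].
clear d7' e'.
split.
  have [x0 [Hx0 Hno]] : exists x0 : V -> int, F x0 0%R = 0 /\
      (inImL M (fun u => Posz (2 ^ (ee M).-1 * C M)%N * x0 u) -> False).
    rewrite /ee; case: ifP => HA; first exact: lower_AE.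
    by apply: lower_NAE => //; rewrite HA.
  exists (fun u => Posz (C M) * x0 u); split; first by rewrite expn_gt0.
  split.
    apply: inImL_ext (upper_core HM Hsp Hx0) => u; by rewrite PoszM mulrA.
  move=> j /andP [j0 jlt] Hj.
  have [m Hm Ej] := pfactor_coprime (isT : prime 2) j0.
  set i := logn 2 j in Ej.
  have ilt : (i < ee M)%N.
    rewrite -(ltn_exp2l _ _ (isT : (1 < 2)%N)); apply: leq_ltn_trans jlt.
    rewrite [X in (_ <= X)%N]Ej leq_pmull // lt0n; apply/eqP => m0.
    by move: j0; rewrite Ej m0 mul0n.
  have H1 : inImL M (fun u => Posz (2 ^ i * m)%N * (Posz (C M) * x0 u)).
    by apply: inImL_ext Hj => u; rewrite {1}Ej mulnC.
  have H2 : inImL M (fun u => Posz (2 ^ (i + (ee M - i)))%N * (Posz (C M) * x0 u)).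
    apply: inImL_ext (upper_core HM Hsp Hx0) => u.
    by rewrite subnKC ?(ltnW ilt) // PoszM mulrA.
  have Hmo : odd m by rewrite -coprime2n.
  have H3 := bez_pow2 Hmo H1 H2.
  apply: Hno.
  apply: inImL_ext (inImL_scale (Posz (2 ^ ((ee M).-1 - i))) H3) => u.
  rewrite mulrA -PoszM -expnD subnK; last by rewrite -ltnS prednK // ee_pos.
  by rewrite PoszM mulrA.
move=> x k [k0 [Hk Hmin]].
have Hx0 : F x 0%R = 0.
  move: Hk => /(inImL_F _ HM) [y Hy].
  move: (Hy 0%R); rewrite F_scale lam0 mul0r => /eqP; rewrite mulf_eq0 => /orP [|/eqP //].
  by rewrite -[0]/(Posz 0) eqz_nat expn_eq0.
have H1 := upper_core HM Hsp Hx0.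
rewrite leqNgt; apply/negP => kgt.
have H2 : inImL M (fun u => Posz (2 ^ (ee M + (k - ee M)))%N * x u).
  by apply: inImL_ext Hk => u; rewrite subnKC // ltnW.
have H3 := bez_pow2 (C_odd Hsp) H1 H2.
apply: (Hmin (2 ^ ee M)%N _ H3).
by rewrite expn_gt0 /= ltn_exp2l.
Qed.
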